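(* For every $\varepsilon\in(0,1)$ and $\ell\in\mathbb{N}$ there is $d_0=d_0(\varepsilon,\ell)$ such that for every $m\in\mathbb{N}$ and every time series $x\in\mathbb{R}^m$ there exists a time series $y\in\mathbb{R}^{d_0}$ such that for every $z\in\mathbb{R}^\ell$, \[(1-\varepsilon)\,d_{dF}(x,z)\le d_{dF}(y,z)\le(1+\varepsilon)\,d_{dF}(x,z).\]
   Context: A time series of complexity $m$ is a vector $x=(x_1,\dots,x_m)\in\mathbb{R}^m$. For $x\in\mathbb{R}^m$ and $y\in\mathbb{R}^\ell$, a traversal is a sequence of index pairs $(i,j)\in[m]\times[\ell]$ starting at $(1,1)$, ending at $(m,\ell)$, in which each pair $(i,j)$ is followed by one of $(i,j+1)$, $(i+1,j)$, $(i+1,j+1)$. The discrete Fréchet distance $d_{dF}(x,y)$ is the minimum over all traversals $T$ of $\max_{(i,j)\in T}|x_i-y_j|$. *)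

(* Defs.v *)
From HB Require Import structures.
From mathcomp Require Import all_boot all_order all_algebra.
From mathcomp Require Import all_classical all_reals.
Set Implicit Arguments. Unset Strict Implicit. Unset Printing Implicit Defensive.
Import Order.TTheory GRing.Theory Num.Theory.
Local Open Scope ring_scope.
Local Open Scope classical_set_scope.

(* A time series of complexity m: x = (x_1,...,x_m), here indexed 0..m-1. *)
Definition tseries (R : realType) (m : nat) := 'I_m -> R.

Definition trav_step (p q : nat * nat) : bool :=
  [|| q == (p.1, p.2.+1), q == (p.1.+1, p.2) | q == (p.1.+1, p.2.+1)].

Definition is_traversal (m l : nat) (T : seq (nat * nat)) : bool :=
  match T with
  | [::] => false
  | p :: T' => [&& p == (0%N, 0%N), path trav_step p T' &
                    last p T' == (m.-1, l.-1)]
  end.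

(* Value of a series at a nat index (0 outside range; never used on
   traversals since they stay in range). *)
Definition tval (R : realType) (m : nat) (x : tseries R m) (i : nat) : R :=
  match insub i with Some i' => x i' | None => 0 end.

Definition trav_cost (R : realType) (m l : nat) (x : tseries R m)
  (y : tseries R l) (T : seq (nat * nat)) : R :=
  \big[Order.max/0]_(p <- T) `|tval x p.1 - tval y p.2|.

(* Discrete Frechet distance: the minimum (infimum over the finite
   nonempty set of traversals) of the traversal costs. *)
Definition dF (R : realType) (m l : nat) (x : tseries R m) (y : tseries R l) : R :=
  inf [set trav_cost x y T | T in [set T | is_traversal m l T]].

(* Main.v *)
Require Import Defs.
From HB Require Import structures.
From mathcomp Require Import all_boot all_order all_algebra.
From mathcomp Require Import all_classical all_reals.
From mathcomp Require Import zify lra ring.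
Import Order.TTheory GRing.Theory Num.Theory.
Set Implicit Arguments. Unset Strict Implicit. Unset Printing Implicit Defensive.

Fixpoint Rel (ok : nat -> nat -> bool) (n i j0 j1 : nat) : Prop :=
  match n with
  | 0 => (j0 <= j1)%N /\ forall t, (j0 <= t <= j1)%N -> ok i t
  | n'.+1 => exists j j', [/\ (j0 <= j)%N, (forall t, (j0 <= t <= j)%N -> ok i t),
                (j' == j) || (j' == j.+1) & Rel ok n' i.+1 j' j1]
  end.

Lemma path_mono T p : path trav_step p T -> forall q, q \in p :: T ->
  [&& (p.1 <= q.1)%N, (q.1 <= (last p T).1)%N, (p.2 <= q.2)%N & (q.2 <= (last p T).2)%N].
Proof.
elim: T p => [|r T IH] p /=.
  by move=> _ q; rewrite inE => /eqP ->; rewrite !leqnn.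
move=> /andP[st pa] q; rewrite inE => /orP[/eqP ->|qin].
  have := IH r pa r (mem_head _ _) => /and4P[_ h1 _ h2].
  move: st h1 h2; rewrite /trav_step => /or3P[] /eqP E; subst r => /= h1 h2;
  apply/and4P; split => //; lia.
have := IH r pa q qin => /and4P[h1 h2 h3 h4].
move: st h1 h2 h3 h4; rewrite /trav_step => /or3P[] /eqP E; subst r => /= h1 h2 h3 h4;
apply/and4P; split => //; lia.
Qed.

Lemma path_cover T p i : path trav_step p T -> (p.1 <= i <= (last p T).1)%N ->
  exists2 q, q \in p :: T & q.1 = i.
Proof.
elim: T p => [|r T IH] p /=.
  by move=> _ hi; exists p; rewrite ?mem_head //; apply/eqP; rewrite eqn_leq.
move=> /andP[st pa] hi.
case: (ltnP i r.1) => hr.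
  exists p; first by rewrite mem_head.
  move: st; rewrite /trav_step => /or3P[] /eqP E; rewrite E /= in hr; lia.
have [q qin qe] := IH r pa (introT andP (conj hr (proj2 (andP hi)))).
by exists q => //; rewrite inE qin orbT.
Qed.

Lemma Rel_ext_left ok n i j j1 : Rel ok n i j.+1 j1 -> ok i j -> Rel ok n i j j1.
Proof.
case: n => [|n] /=.
  move=> [h1 h2] okj; split; first lia.
  move=> t ht; case: (ltnP j t) => htj; first by apply: h2; lia.
  by have -> : t = j by lia.
move=> [j2 [j' [h1 h2 h3 h4]]] okj; exists j2, j'; split => //; first lia.
move=> t ht; case: (ltnP j t) => htj; first by apply: h2; lia.
by have -> : t = j by lia.
Qed.

Lemma path_Rel ok T p : path trav_step p T -> all (fun q => ok q.1 q.2) (p :: T) ->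
  Rel ok ((last p T).1 - p.1) p.1 p.2 (last p T).2.
Proof.
elim: T p => [|r T IH] p /=.
  move=> _ /andP[okp _]; rewrite subnn; split => // t ht.
  by have -> : t = p.2 by lia.
move=> /andP[st pa] /andP[okp /andP[okr alr]].
have := IH r pa (introT andP (conj okr alr)).
have := path_mono pa (mem_head _ _) => /and4P[_ hr _ _].
move: st hr; rewrite /trav_step => /or3P[] /eqP E; subst r => /= hr H.
- by apply: Rel_ext_left.
- move: H hr; case: (last _ T) => a b /= H hr.
  have -> : (a - p.1 = (a - p.1.+1).+1)%N by lia.
  exists p.2, p.2; split => //; last by rewrite eqxx.
  by move=> t ht; have -> : t = p.2 by lia.
- move: H hr; case: (last _ T) => a b /= H hr.
  have -> : (a - p.1 = (a - p.1.+1).+1)%N by lia.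
  exists p.2, p.2.+1; split => //; last by rewrite eqxx orbT.
  by move=> t ht; have -> : t = p.2 by lia.
Qed.

Lemma row_ext (ok : nat -> nat -> bool) i k j X : (forall t, (j <= t <= j + k)%N -> ok i t) ->
  (exists T, [/\ path trav_step (i, j + k) T, last (i, j + k) T = X &
     all (fun q => ok q.1 q.2) ((i, j + k) :: T)]) ->
  exists T, [/\ path trav_step (i, j) T, last (i, j) T = X &
     all (fun q => ok q.1 q.2) ((i, j) :: T)].
Proof.
elim: k j => [|k IH] j hok; first by rewrite addn0.
move=> H.
have h1 : forall t, (j.+1 <= t <= j.+1 + k)%N -> ok i t.
  by move=> t ht; apply: hok; lia.
rewrite -addSnnS in H.
have [T [p1 p2 p3]] := IH j.+1 h1 H.
exists ((i, j.+1) :: T); split => //=.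
  by rewrite /trav_step /= eqxx p1.
by rewrite hok ?leqnn ?leq_addr //.
Qed.

Lemma Rel_path (ok : nat -> nat -> bool) n i j0 j1 : Rel ok n i j0 j1 ->
  exists T, [/\ path trav_step (i, j0) T, last (i, j0) T = (i + n, j1)%N &
     all (fun q => ok q.1 q.2) ((i, j0) :: T)].
Proof.
elim: n i j0 => [|n IH] i j0 /=.
  move=> [h1 h2].
  have := @row_ext ok i (j1 - j0) j0 (i + 0, j1)%N.
  rewrite subnKC //; apply => //.
  exists [::]; split => //=; first by rewrite addn0.
  by rewrite andbT h2 // leqnn andbT.
move=> [j [j' [h1 h2 h3 h4]]].
have [T [p1 p2 p3]] := IH _ _ h4.
have := @row_ext ok i (j - j0) j0 (i + n.+1, j1)%N.
rewrite subnKC //; apply; first by move=> t ht; apply: h2; lia.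
exists ((i.+1, j') :: T); split => /=.
- rewrite p1 andbT /trav_step /=.
  by case/orP: h3 => /eqP ->; rewrite eqxx ?orbT.
- by rewrite p2 addSnnS.
- by rewrite h2 ?leqnn ?h1 //=.
Qed.


Definition rel1 (A : finType) (l : nat) (M : {ffun A * 'I_l -> bool}) (a : A)
  : {set 'I_l * 'I_l} :=
  [set p : 'I_l * 'I_l | (p.1 <= p.2)%N && [forall t : 'I_l, ((p.1 <= t) && (t <= p.2))%N ==> M (a, t)]].

Definition stepS (l : nat) (j j' : 'I_l) : bool :=
  (nat_of_ord j' == nat_of_ord j) || (nat_of_ord j' == (nat_of_ord j).+1).

Definition kcomp (l : nat) (K1 K2 : {set 'I_l * 'I_l}) : {set 'I_l * 'I_l} :=
  [set p : 'I_l * 'I_l | [exists j : 'I_l, [exists j' : 'I_l, [&& (p.1, j) \in K1, stepS j j' & (j', p.2) \in K2]]]].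

Fixpoint keyM (A : finType) (l : nat) (M : {ffun A * 'I_l -> bool}) (a : A) (s : seq A)
  : {set 'I_l * 'I_l} :=
  match s with
  | [::] => rel1 M a
  | b :: s' => kcomp (rel1 M a) (keyM M b s')
  end.

Lemma comp_assoc l (K1 K2 K3 : {set 'I_l * 'I_l}) :
  kcomp (kcomp K1 K2) K3 = kcomp K1 (kcomp K2 K3).
Proof.
apply/setP => -[a b]; rewrite !inE /=.
apply/idP/idP => /existsP[j /existsP[j' /and3P[]]].
  rewrite inE /= => /existsP[k /existsP[k' /and3P[h1 h2 h3]]] h4 h5.
  apply/existsP; exists k; apply/existsP; exists k'; rewrite h1 h2 /= inE /=.
  by apply/existsP; exists j; apply/existsP; exists j'; rewrite h3 h4 h5.
move=> h1 h2; rewrite inE /= => /existsP[k /existsP[k' /and3P[h3 h4 h5]]].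
apply/existsP; exists k; apply/existsP; exists k'; rewrite h4 h5 !andbT /= inE /=.
by apply/existsP; exists j; apply/existsP; exists j'; rewrite h1 h2 h3.
Qed.

Lemma keyM_cat (A : finType) l (M : {ffun A * 'I_l -> bool}) a s b t :
  keyM M a (s ++ b :: t) = kcomp (keyM M a s) (keyM M b t).
Proof.
elim: s a => [|c s IH] a //=.
by rewrite IH comp_assoc.
Qed.

Lemma comp_rel1 (A : finType) l (M : {ffun A * 'I_l -> bool}) a :
  kcomp (rel1 M a) (rel1 M a) = rel1 M a.
Proof.
apply/setP => -[j0 j1]; rewrite !inE /=.
apply/idP/idP => [/existsP[j /existsP[j' /and3P[]]]|/andP[h1 /forallP h2]].
  rewrite !inE /= => /andP[h1 /forallP h2] h3 /andP[h4 /forallP h5].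
  have h6 : (j0 <= j1)%N by move: h3; rewrite /stepS => /orP[] /eqP; lia.
  rewrite h6 /=; apply/forallP => t; apply/implyP => ht.
  case: (leqP t j) => htj.
    by have := h2 t; rewrite htj (proj1 (andP ht)) /=.
  have := h5 t; rewrite (proj2 (andP ht)) andbT /= => /implyP; apply.
  by move: h3; rewrite /stepS => /orP[] /eqP; lia.
apply/existsP; exists j0; apply/existsP; exists j0; rewrite /stepS eqxx /= !inE /= leqnn h1 /=.
apply/andP; split; apply/forallP => t; apply/implyP => ht; have := h2 t.
  by rewrite (_ : t = j0) ?leqnn ?h1 //; apply/val_inj; move: ht => /=; lia.
by rewrite ht.
Qed.

Lemma keyM_stutter (A : finType) l (M : {ffun A * 'I_l -> bool}) a s :
  keyM M a (a :: s) = keyM M a s.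
Proof.
case: s => [|b s] /=; first exact: comp_rel1.
by rewrite -comp_assoc comp_rel1.
Qed.

Lemma keyM_nseq (A : finType) l (M : {ffun A * 'I_l -> bool}) a k s :
  keyM M a (nseq k a ++ s) = keyM M a s.
Proof.
elim: k => [|k IH] //=.
by rewrite -IH -[in RHS]keyM_stutter.
Qed.

Definition KF (A : finType) (l : nat) (a : A) (s : seq A) :
  {ffun {ffun A * 'I_l -> bool} -> {set 'I_l * 'I_l}} :=
  [ffun M => keyM M a s].

Lemma KF_cat (A : finType) l (a a' : A) s s' b t :
  KF l a s = KF l a' s' -> KF l a (s ++ b :: t) = KF l a' (s' ++ b :: t).
Proof.
move=> E; apply/ffunP => M; rewrite !ffunE !keyM_cat.
by move/ffunP: E => /(_ M); rewrite !ffunE => ->.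
Qed.

Lemma kshorten (A : finType) l (a : A) s : exists s',
  (size s' < #|{: {ffun {ffun A * 'I_l -> bool} -> {set 'I_l * 'I_l}}}|)%N
  /\ KF l a s' = KF l a s.
Proof.
move: {2}(size s) (leqnn (size s)) => n; elim: n s => [|n IH] s hs.
  case: s hs => // _; exists [::]; split => //.
  by apply/card_gt0P; exists (KF l a [::]).
case: (ltnP (size s) #|{: {ffun {ffun A * 'I_l -> bool} -> {set 'I_l * 'I_l}}}|) => hc.
  by exists s.
pose g (k : 'I_(size s).+1) := KF l a (take k s).
have ninj : ~ injective g.
  move=> /leq_card; rewrite card_ord => h.  have := leq_trans h hc; by rewrite ltnn.
have [k1 [k2 [hg hne]]] : exists k1 k2, g k1 = g k2 /\ k1 <> k2.
  apply: contra_notP ninj => H x y hxy; apply: contrapT => hne.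
  by apply: H; exists x, y.
wlog hlt : k1 k2 hg hne / (k1 < k2)%N.
  move=> W; case: (ltngtP k1 k2) => h; first exact: (W k1 k2 hg hne h).
    exact: (W k2 k1 (esym hg) (nesym hne) h).
  by exfalso; apply: hne; apply: val_inj.
have hk2 : (k2 <= size s)%N by rewrite -ltnS.
have hg' : KF l a (take k1 s) = KF l a (take k2 s) := hg.
move: hg' hlt hk2; move: (nat_of_ord k1) (nat_of_ord k2) => n1 n2 hg' hlt hk2.
have [s2 [h1 h2]] : exists s2, (size s2 < size s)%N /\ KF l a s2 = KF l a s.
  case: (ltnP n2 (size s)) => hk.
    exists (take n1 s ++ nth a s n2 :: drop n2.+1 s); split.
      rewrite size_cat /= size_take size_drop.
      case: (ltnP n1 (size s)) => ?; lia.
    have Es : take n2 s ++ nth a s n2 :: drop n2.+1 s = s.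
      by rewrite -drop_nth // cat_take_drop.
    by rewrite -[in RHS]Es; apply: KF_cat.
  have E : n2 = size s by apply/eqP; rewrite eqn_leq hk hk2.
  exists (take n1 s); split.
    by rewrite size_take -E hlt.
  by move: hg'; rewrite E take_size.
have [s' [h3 h4]] := IH s2 (leq_trans (leq_trans h1 hs) (leqnn _)).
by exists s'; split => //; rewrite h4.
Qed.


Lemma compress (A : finType) l (a : A) s : exists s',
  size s' = #|{: {ffun {ffun A * 'I_l -> bool} -> {set 'I_l * 'I_l}}}|.-1
  /\ forall M : {ffun A * 'I_l -> bool}, keyM M a s' = keyM M a s.
Proof.
have [s1 [h1 h2]] := @kshorten A l a s.
exists (nseq (#|{: {ffun {ffun A * 'I_l -> bool} -> {set 'I_l * 'I_l}}}|.-1 - size s1) a ++ s1).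
split; first by rewrite size_cat size_nseq; lia.
move=> M; rewrite keyM_nseq.
by move/ffunP: h2 => /(_ M); rewrite !ffunE.
Qed.

Fixpoint wordFrom (A : Type) (f : nat -> A) (i n : nat) : seq A :=
  match n with
  | 0 => [::]
  | n'.+1 => f i :: wordFrom f i.+1 n'
  end.

Lemma wordFrom_shift (A : Type) (f : nat -> A) i n :
  wordFrom f i.+1 n = wordFrom (fun j => f j.+1) i n.
Proof. by elim: n i => [|n IH] i //=; rewrite IH. Qed.

Lemma wordFrom_nth (A : Type) (d : A) s : wordFrom (nth d s) 0 (size s) = s.
Proof.
elim: s => [|b s IH] //=.
by rewrite wordFrom_shift IH.
Qed.

Lemma Rel_start ok n i j0 j1 : Rel ok n i j0 j1 -> ok i j0.
Proof.
case: n => [|n] /=.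
  by move=> [h1 h2]; apply: h2; rewrite leqnn.
by move=> [j [j' [h1 h2 _ _]]]; apply: h2; rewrite leqnn.
Qed.

Lemma Rel_key (A : finType) l (M : {ffun A * 'I_l -> bool}) (f : nat -> A)
  (ok : nat -> nat -> bool) n i (j0 j1 : 'I_l) :
  (forall k t, (k <= n)%N -> ok (i + k)%N t -> (t < l)%N) ->
  (forall k (t : 'I_l), (k <= n)%N -> ok (i + k)%N t = M (f (i + k)%N, t)) ->
  Rel ok n i j0 j1 <-> (j0, j1) \in keyM M (f i) (wordFrom f i.+1 n).
Proof.
elim: n i j0 j1 => [|n IH] i j0 j1 hb he /=.
  rewrite inE /=; split.
    move=> [h1 h2]; rewrite h1 /=; apply/forallP => t; apply/implyP => ht.
    by have := he 0%N t (leq0n _); rewrite addn0 => <-; apply: h2.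
  move=> /andP[h1 /forallP h2]; split => // t ht.
  have tl : (t < l)%N by apply: leq_ltn_trans (ltn_ord j1); case/andP: ht.
  have := he 0%N (Ordinal tl) (leqnn _); rewrite addn0 /= => ->.
  by have := h2 (Ordinal tl); rewrite ht.
have hb' : forall k t, (k <= n)%N -> ok (i.+1 + k)%N t -> (t < l)%N.
  by move=> k t hk; rewrite addSnnS; apply: hb.
have he' : forall k (t : 'I_l), (k <= n)%N -> ok (i.+1 + k)%N t = M (f (i.+1 + k)%N, t).
  by move=> k t hk; rewrite addSnnS; apply: he.
rewrite inE /=; split.
  move=> [j [j' [h1 h2 h3 h4]]].
  have jl : (j < l)%N by apply: (hb 0%N) => //; rewrite addn0; apply: h2; rewrite h1 leqnn.
  have j'l : (j' < l)%N.
    by have := Rel_start h4; rewrite -[i.+1]addn0 => /hb'; apply.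
  apply/existsP; exists (Ordinal jl); apply/existsP; exists (Ordinal j'l).
  have -> : stepS (Ordinal jl) (Ordinal j'l) by [].
  rewrite /= inE /= h1 /=; apply/andP; split.
    apply/forallP => t; apply/implyP => ht.
    by have := he 0%N t (leq0n _); rewrite addn0 => <-; apply: h2.
  by apply/IH.
move=> /existsP[j /existsP[j' /and3P[]]].
rewrite inE /= => /andP[h1 /forallP h2] h3 h4.
exists j, j'; split => //.
- move=> t ht.
  have tl : (t < l)%N by apply: leq_ltn_trans (ltn_ord j); case/andP: ht.
  have := he 0%N (Ordinal tl) (leq0n _); rewrite addn0 /= => ->.
  by have := h2 (Ordinal tl); rewrite ht.
- by apply/(IH _ j' j1).
Qed.

Local Open Scope ring_scope.

Lemma cost_ge0 (R : realType) m l (x : tseries R m) (z : tseries R l) T :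
  0 <= trav_cost x z T.
Proof.
rewrite /trav_cost; elim: T => [|q T IH]; first by rewrite big_nil.
by rewrite big_cons le_max IH orbT.
Qed.

Lemma cost_le (R : realType) m l (x : tseries R m) (z : tseries R l) T d :
  trav_cost x z T <= d <->
  (0 <= d /\ forall q, q \in T -> `|Defs.tval x q.1 - Defs.tval z q.2| <= d).
Proof.
rewrite /trav_cost; elim: T => [|q T IH].
  by rewrite big_nil; split => [h|[]//]; split.
rewrite big_cons ge_max; split.
  move=> /andP[h1 /IH[h2 h3]]; split => // r; rewrite inE => /orP[/eqP ->//|].
  exact: h3.
move=> [h1 h2]; rewrite h2 ?mem_head //=; apply/IH; split => // r hr.
by apply: h2; rewrite inE hr orbT.
Qed.

Definition okf (R : realType) m l (x : tseries R m) (z : tseries R l) (d : R) i t :=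
  (t < l)%N && (`|Defs.tval x i - Defs.tval z t| <= d).

Lemma bridge (R : realType) m l (x : tseries R m) (z : tseries R l) d :
  (0 < m)%N -> (0 < l)%N -> 0 <= d ->
  (exists T, is_traversal m l T /\ trav_cost x z T <= d) <->
  Rel (okf x z d) m.-1 0 0 l.-1.
Proof.
move=> hm hl hd; split.
  move=> [[|p T] [//= /and3P[/eqP hp pa /eqP hla] /cost_le [_ hc]]].
  have hall : all (fun q => okf x z d q.1 q.2) (p :: T).
    apply/allP => q hq; rewrite /okf hc // andbT.
    have := path_mono pa hq; rewrite hla /= => /and4P[_ _ _ h]; lia.
  by have := @path_Rel (okf x z d) T p pa hall; rewrite hla hp /= subn0.
move=> /Rel_path [T [h1 h2 h3]].
exists ((0, 0)%N :: T); split.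
  by rewrite /is_traversal eqxx h1 h2 add0n eqxx.
apply/cost_le; split => // q hq.
by move/allP: h3 => /(_ q hq) /andP[].
Qed.

Lemma Rel_all (l n i j0 j1 : nat) : (j0 <= j1 < l)%N -> Rel (fun _ t => (t < l)%N) n i j0 j1.
Proof.
elim: n i j0 => [|n IH] i j0 /= /andP[h1 h2].
  by split => // t ht; lia.
exists j0, j0; split => //; first by move=> t ht; lia.
  by rewrite eqxx.
by apply: IH; rewrite h1.
Qed.

Lemma trav_exists m l : (0 < m)%N -> (0 < l)%N -> exists T, is_traversal m l T.
Proof.
move=> hm hl.
have [|T [h1 h2 _]] := @Rel_path (fun _ t => (t < l)%N) m.-1 0 0 l.-1.
  by apply: Rel_all; lia.
by exists ((0, 0)%N :: T); rewrite /is_traversal eqxx h1 h2 add0n eqxx.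
Qed.

Lemma dF_transfer (R : realType) m1 m2 l (x1 : tseries R m1) (x2 : tseries R m2)
  (z : tseries R l) e :
  (exists T, is_traversal m2 l T) ->
  (forall T2, is_traversal m2 l T2 -> exists T1,
      is_traversal m1 l T1 /\ trav_cost x1 z T1 <= trav_cost x2 z T2 + e) ->
  dF x1 z <= dF x2 z + e.
Proof.
move=> [T0 h0] H; rewrite -lerBlDr /dF.
apply: lb_le_inf; first by exists (trav_cost x2 z T0); exists T0.
move=> _ [T2 h2 <-]; have [T1 [h1 hc]] := H T2 h2.
rewrite lerBlDr; apply: (le_trans _ hc).
apply: ge_inf; last by exists T1.
by exists 0 => _ [T _ <-]; apply: cost_ge0.
Qed.

Lemma dF_ge0 (R : realType) m l (x : tseries R m) (z : tseries R l) :
  (0 < m)%N -> (0 < l)%N -> 0 <= dF x z.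
Proof.
move=> hm hl; have [T0 h0] := trav_exists hm hl.
apply: lb_le_inf; first by exists (trav_cost x z T0); exists T0.
by move=> _ [T _ <-]; apply: cost_ge0.
Qed.

Lemma dF_perturb (R : realType) m l (x1 x2 : tseries R m) (z : tseries R l) e :
  (0 < m)%N -> (0 < l)%N -> 0 <= e -> (forall i, `|x1 i - x2 i| <= e) ->
  dF x1 z <= dF x2 z + e.
Proof.
move=> hm hl he H; apply: dF_transfer; first exact: trav_exists.
move=> T hT; exists T; split => //.
apply/cost_le; split; first by apply: addr_ge0 => //; apply: cost_ge0.
move=> q hq.
have := (proj1 (cost_le x2 z T (trav_cost x2 z T))) (lexx _) => -[_ /(_ q hq) h2].
have h3 : `|Defs.tval x1 q.1 - Defs.tval x2 q.1| <= e.
  by rewrite /Defs.tval; case: (insub q.1) => [i|] //=; rewrite subr0 normr0.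
apply: le_trans (lerD h2 h3).
rewrite (_ : Defs.tval x1 q.1 - Defs.tval z q.2 = (Defs.tval x2 q.1 - Defs.tval z q.2) + (Defs.tval x1 q.1 - Defs.tval x2 q.1)).
  exact: ler_normD.
by rewrite [RHS]addrC addrA subrK.
Qed.

Lemma dF_eq (R : realType) m1 m2 l (x1 : tseries R m1) (x2 : tseries R m2)
  (z : tseries R l) :
  (0 < m1)%N -> (0 < m2)%N -> (0 < l)%N ->
  (forall d, 0 <= d -> Rel (okf x1 z d) m1.-1 0 0 l.-1 <-> Rel (okf x2 z d) m2.-1 0 0 l.-1) ->
  dF x1 z = dF x2 z.
Proof.
move=> h1 h2 hl H; apply/eqP; rewrite eq_le; apply/andP; split.
  rewrite -[X in _ <= X]addr0; apply: dF_transfer; first exact: trav_exists.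
  move=> T hT; have hc := cost_ge0 x2 z T.
  have /(bridge _ _ h1 hl hc) [T1 [hT1 hc1]] : Rel (okf x1 z (trav_cost x2 z T)) m1.-1 0 0 l.-1.
    by apply/H => //; apply/(bridge _ _ h2 hl hc); exists T.
  by exists T1; rewrite addr0.
rewrite -[X in _ <= X]addr0; apply: dF_transfer; first exact: trav_exists.
move=> T hT; have hc := cost_ge0 x1 z T.
have /(bridge _ _ h2 hl hc) [T1 [hT1 hc1]] : Rel (okf x2 z (trav_cost x1 z T)) m2.-1 0 0 l.-1.
  by apply/H => //; apply/(bridge _ _ h1 hl hc); exists T.
by exists T1; rewrite addr0.
Qed.


Lemma tval_ord (R : realType) m (x : tseries R m) (i : 'I_m) : Defs.tval x i = x i.
Proof. by rewrite /Defs.tval valK. Qed.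

Lemma tval_F (R : realType) m (x : tseries R m) (F : nat -> R) k :
  (forall i : 'I_m, x i = F i) -> (k < m)%N -> Defs.tval x k = F k.
Proof.
move=> H hk; rewrite /Defs.tval; case: insubP => [k' _ <-|/negP//].
exact: H.
Qed.

Lemma approx_cover (R : realType) m l (x : tseries R m) (B : R) :
  (0 < m)%N -> (0 < l)%N ->
  inf [set dF x z | z in [set: tseries R l]] < B ->
  exists (z0 : tseries R l) (j : 'I_m -> 'I_l), forall i, `|x i - z0 (j i)| < B.
Proof.
move=> hm hl /inf_lt [].
  by exists (dF x (fun _ : 'I_l => 0)); exists (fun _ : 'I_l => 0).
move=> _ [z0 _ <-] /inf_lt [].
  by have [T hT] := trav_exists hm hl; exists (trav_cost x z0 T); exists T.
move=> _ [T hT <-] hc.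
move: hT; case: T hc => [|p T] hc //= /and3P[/eqP hp pa /eqP hla].
exists z0, (fun i => odflt (Ordinal hl) [pick jj : 'I_l | (val i, val jj) \in p :: T]).
move=> i.
have [q hq hq1] : exists2 q, q \in p :: T & q.1 = val i.
  apply: path_cover pa _; rewrite hla hp /=; have := ltn_ord i; lia.
have hq2 : (q.2 < l)%N.
  by have := path_mono pa hq; rewrite hla /= => /and4P[_ _ _ h]; lia.
case: pickP => [jj hjj | H]; last first.
  by have := H (Ordinal hq2); rewrite /= -hq1 -surjective_pairing hq.
apply: le_lt_trans hc.
have := (proj1 (cost_le x z0 (p :: T) (trav_cost x z0 (p :: T)))) (lexx _).
by move=> [_ /(_ _ hjj)] /=; rewrite !tval_ord.
Qed.

Local Open Scope classical_set_scope.

Definition NN (R : realType) (eps : R) : nat := (Num.truncn (2 / eps)).+1.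

Lemma represent (R : realType) (eps : R) l m (x : tseries R m) :
  0 < eps -> (0 < m)%N -> (0 < l)%N ->
  exists (c : 'I_m -> ('I_l * 'I_((NN eps).*2))%type) (phi : ('I_l * 'I_((NN eps).*2))%type -> R) (e : R),
  [/\ 0 <= e, forall z : tseries R l, e <= eps * dF x z & forall i, `|phi (c i) - x i| <= e].
Proof.
move=> he hm hl.
set S := [set dF x z | z in [set: tseries R l]].
have Sne : S !=set0 by exists (dF x (fun _ : 'I_l => 0)); exists (fun _ : 'I_l => 0).
have Slb : has_lbound S by exists 0 => _ [z _ <-]; apply: dF_ge0.
have glb : forall z : tseries R l, inf S <= dF x z.
  by move=> z; have := ge_inf Slb; apply; exists z.
have g0 : 0 <= inf S by apply: lb_le_inf => // _ [z _ <-]; apply: dF_ge0.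
have hN : 2 / eps < (NN eps)%:R by rewrite /NN; apply: truncnS_gt.
have hN0 : (0 < (NN eps).*2)%N by rewrite /NN; lia.
case: (ltrP 0 (inf S)) => gpos.
  have [|z0 [j hj]] := @approx_cover R m l x (2 * inf S) hm hl; first lra.
  set s := eps * inf S.
  have spos : 0 < s by apply: mulr_gt0.
  pose r i := (x i - z0 (j i)) / s + (NN eps)%:R.
  have hN2 : 2 < (NN eps)%:R * eps by rewrite -ltr_pdivrMr.
  have hr : forall i, 0 <= r i < ((NN eps).*2)%:R.
    move=> i; have := hj i; rewrite /r ltr_norml => /andP[h1 h2].
    set u := x i - z0 (j i) in h1 h2 *.
    have hu1 : u / s < (NN eps)%:R.
      rewrite ltr_pdivrMr //; rewrite /s; nra.
    have hu2 : - (NN eps)%:R < u / s.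
      rewrite ltr_pdivlMr //; rewrite /s; nra.
    rewrite -addnn natrD; apply/andP; split; lra.
  pose k i := Num.truncn (r i).
  have klt : forall i, (k i < (NN eps).*2)%N.
    by move=> i; rewrite /k truncn_lt_nat; case/andP: (hr i).
  exists (fun i => (j i, Ordinal (klt i))).
  exists (fun p => z0 p.1 + s * ((nat_of_ord p.2)%:R - (NN eps)%:R)).
  exists s; split.
  - exact: ltW.
  - by move=> z; apply: ler_wpM2l; [exact: ltW | exact: glb].
  - move=> i /=.
    have := truncn_itv (proj1 (andP (hr i))); rewrite -/(k i) => /andP[hk1 hk2].
    have hu : x i - z0 (j i) = s * (r i - (NN eps)%:R).
      by rewrite /r addrK mulrC divfK // gt_eqF.
    have -> : z0 (j i) + s * ((k i)%:R - (NN eps)%:R) - x i = - (s * (r i - (k i)%:R)).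
      by rewrite -[x i](subrK (z0 (j i))) hu; ring.
    rewrite normrN ger0_norm; last by apply: mulr_ge0; [exact: ltW | lra].
    rewrite -[X in _ <= X]mulr1; apply: ler_wpM2l; [exact: ltW | lra].
have g00 : inf S = 0 by apply/eqP; rewrite eq_le gpos g0.
pose r0 := \big[Order.min/1]_(p : 'I_m * 'I_m)
             (if x p.1 == x p.2 then 1 else `|x p.1 - x p.2|).
have r0pos : 0 < r0.
  apply/bigmin_gtP; split => // p _; case: ifP => // /negbT h.
  by rewrite normr_gt0 subr_eq0.
have [|z0 [j hj]] := @approx_cover R m l x (r0 / 2) hm hl; first by rewrite g00; lra.
exists (fun i => (j i, Ordinal hN0)).
exists (fun p => if [pick i | j i == p.1] is Some i' then x i' else 0).
exists 0; split => //.
  by move=> z; apply: mulr_ge0; [exact: ltW | apply: dF_ge0].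
move=> i /=; case: pickP => [i' /eqP hi'| H]; last by have := H i; rewrite eqxx.
case: (eqVneq (x i') (x i)) => [->|hne]; first by rewrite subrr normr0.
exfalso.
have h1 : r0 <= `|x i' - x i|.
  by have := bigmin_le 1 (i', i) (fun p : 'I_m * 'I_m => if x p.1 == x p.2 then 1 else `|x p.1 - x p.2|); rewrite /= (negbTE hne).
have h2 := hj i; have h3 := hj i'; rewrite hi' in h3.
have : `|x i' - x i| <= `|x i' - z0 (j i)| + `|z0 (j i) - x i|.
  by have := ler_normD (x i' - z0 (j i)) (z0 (j i) - x i); rewrite addrA subrK.
rewrite distrC in h2 |- *.
lra.
Qed.

Unset Implicit Arguments.
Close Scope classical_set_scope.

Theorem corollary4p7 (R : realType) (eps : R) (l : nat) :
  0 < eps < 1 -> (0 < l)%N ->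
  exists d0 : nat, (0 < d0)%N /\
    forall (m : nat) (x : tseries R m), (0 < m)%N ->
      exists y : tseries R d0,
        forall z : tseries R l,
          (1 - eps) * dF x z <= dF y z /\ dF y z <= (1 + eps) * dF x z.
Proof.
move=> /andP[e0 e1] hl.
pose A := ('I_l * 'I_((NN eps).*2))%type.
pose d0 := #|{: {ffun {ffun A * 'I_l -> bool} -> {set 'I_l * 'I_l}}}|.
have hd0 : (0 < d0)%N.
  by apply/card_gt0P; exists [ffun _ => (@finset.set0 _ : {set 'I_l * 'I_l})].
exists d0; split => // m x hm.
have [c [phi [e [he0 hez hei]]]] := represent x e0 hm hl.
pose x' : tseries R m := fun i => phi (c i).
pose f (i : nat) : A := if insub i is Some i' then c i' else c (Ordinal hm).
pose a := f 0%N.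
pose s := wordFrom f 1 m.-1.
have [s' [hs' hk]] := @compress A l a s.
pose y : tseries R d0 := fun i => phi (nth a (a :: s') i).
exists y => z.
have h0l : (0 < l)%N := hl.
have h1l : (l.-1 < l)%N by lia.
have E : dF y z = dF x' z.
  apply: dF_eq => // d hd.
  pose M : {ffun A * 'I_l -> bool} := [ffun p => `|phi p.1 - z p.2| <= d].
  have Ky := @Rel_key A l M (nth a (a :: s')) (okf y z d) d0.-1 0 (Ordinal h0l) (Ordinal h1l).
  have Kx := @Rel_key A l M f (okf x' z d) m.-1 0 (Ordinal h0l) (Ordinal h1l).
  have wy : wordFrom (nth a (a :: s')) 1 d0.-1 = s'.
    have := wordFrom_nth a (a :: s'); rewrite /= -hs'; by case.
  rewrite /= wy in Ky; rewrite /= -/s in Kx.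
  rewrite (Kx _ _); last first.
  - move=> k t hk0; rewrite /okf /= ltn_ord /= ffunE /= tval_ord.
    rewrite (@tval_F R m x' (fun k => phi (f k))) //; last by lia.
    by move=> i; rewrite /x' /f valK.
  - by move=> k t hk0 /andP[].
  rewrite (Ky _ _); last first.
  - move=> k t hk0; rewrite /okf /= ltn_ord /= ffunE /= tval_ord.
    by rewrite (@tval_F R d0 y (fun k => phi (nth a (a :: s') k))) //; lia.
  - by move=> k t hk0 /andP[].
  by rewrite hk.
have h1 : dF x' z <= dF x z + e.
  by apply: dF_perturb => // i; apply: hei.
have h2 : dF x z <= dF x' z + e.
  by apply: dF_perturb => // i; rewrite distrC; apply: hei.
have := hez z; rewrite E; split; lra.
Qed.
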